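(* For every integer $t$, \begin{align*} \sum_{n=1}^\infty(-1)^{n-1}\binom{2n}{n}\frac{O_n}{8^n}L_{n+t}&=\frac{\sqrt2}{2\sqrt{\alpha+2}}\left(\bigl(\alpha^{t+1}-L_{t-1}\bigr)\ln\Bigl(\frac{\sqrt5}{2}\Bigr)+\bigl(\alpha^{t-2}+L_{t-1}\bigr)\ln\alpha\right),\\ \sum_{n=1}^\infty(-1)^{n-1}\binom{2n}{n}\frac{O_n}{8^n}F_{n+t}&=\frac{\sqrt{10}}{10\sqrt{\alpha+2}}\left(\bigl(\alpha^{t-2}+L_{t-1}\bigr)\ln\Bigl(\frac{\sqrt5}{2}\Bigr)+\bigl(\alpha^{t+1}-L_{t-1}\bigr)\ln\alpha\right), \end{align*} and, more generally, for every gibonacci sequence $G_j=G_j(a,b)$, \begin{align*} \sum_{n=1}^\infty(-1)^{n-1}\binom{2n}{n}\frac{O_n}{8^n}G_{n+t}&=\frac{\sqrt{10}}{10\sqrt{\alpha+2}}\Bigl(\bigl(\alpha^{t-3}(b\alpha+a)+G_t+G_{t-2}\bigr)\ln\Bigl(\frac{\sqrt5}{2}\Bigr)\\ &\qquad+\bigl(\alpha^t(b\alpha+a)-G_t-G_{t-2}\bigr)\ln\alpha\Bigr). \end{align*}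
   Context: $O_n=\sum_{j=1}^n\frac1{2j-1}$. $F_n$ and $L_n$ are the Fibonacci and Lucas numbers ($F_0=0,F_1=1$, $L_0=2,L_1=1$, $u_n=u_{n-1}+u_{n-2}$), extended to all integers by the recurrence. $\alpha=(1+\sqrt5)/2$, $\beta=-1/\alpha$. For numbers $a,b$ not both zero, the gibonacci sequence $G_j=G_j(a,b)$ is defined by $G_0=a$, $G_1=b$, $G_j=G_{j-1}+G_{j-2}$, extended to negative indices by $G_{-j}=G_{-(j-2)}-G_{-(j-1)}$; equivalently $G_j=\frac{(b-a\beta)\alpha^j+(a\alpha-b)\beta^j}{\alpha-\beta}$. *)

(* Defs.v *)
From Stdlib Require Import Reals Lra Lia ZArith.
From Coquelicot Require Import Coquelicot.
Open Scope R_scope.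

Fixpoint Odd_harm (n : nat) : R :=
  match n with
  | O => 0
  | S m => Odd_harm m + / (2 * INR (S m) - 1)
  end.

(* forward values: returns (G_n, G_{n+1}) *)
Fixpoint gib_fwd (a b : R) (n : nat) : R * R :=
  match n with
  | O => (a, b)
  | S m => let p := gib_fwd a b m in (snd p, fst p + snd p)
  end.

(* backward values: returns (G_{-n}, G_{-n+1}) using G_{-j} = G_{-(j-2)} - G_{-(j-1)} *)
Fixpoint gib_bwd (a b : R) (n : nat) : R * R :=
  match n with
  | O => (a, b)
  | S m => let p := gib_bwd a b m in (snd p - fst p, fst p)
  end.

Definition gib (a b : R) (j : Z) : R :=
  if (0 <=? j)%Z then fst (gib_fwd a b (Z.to_nat j))
  else fst (gib_bwd a b (Z.to_nat (- j))).

Definition Fib (j : Z) : R := gib 0 1 j.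
Definition Luc (j : Z) : R := gib 2 1 j.

Definition alpha : R := (1 + sqrt 5) / 2.

Definition coef (n : nat) : R :=
  (-1) ^ (n - 1) * Binomial.C (2 * n) n * Odd_harm n / 8 ^ n.

(* Main.v *)
Require Import Defs.
From Stdlib Require Import Reals Lra Lia ZArith.
From Coquelicot Require Import Coquelicot.
Open Scope R_scope.

Definition aC (n : nat) : R := Binomial.C (2 * n) n.
Definition bC (n : nat) : R := aC n * Odd_harm n.

Lemma aC_0 : aC 0 = 1.
Proof. unfold aC, Binomial.C. simpl. field. Qed.

Lemma aC_S n : aC (S n) = aC n * (2 * (2 * INR n + 1)) / (INR n + 1).
Proof.
  unfold aC, Binomial.C.
  replace (2 * S n - S n)%nat with (S n) by lia.
  replace (2 * n - n)%nat with n by lia.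
  replace (2 * S n)%nat with (S (S (2 * n))) by lia.
  rewrite !fact_simpl, !mult_INR, !S_INR, mult_INR.
  pose proof (INR_fact_neq_0 n). pose proof (INR_fact_neq_0 (2*n)).
  pose proof (pos_INR n).
  simpl INR. field. repeat split; try lra.
Qed.

Lemma aC_pos n : 0 < aC n.
Proof.
  induction n. rewrite aC_0; lra.
  rewrite aC_S. pose proof (pos_INR n).
  apply Rdiv_lt_0_compat; [apply Rmult_lt_0_compat|]; lra.
Qed.

Lemma aC_le n : aC n <= 4 ^ n.
Proof.
  induction n. rewrite aC_0; simpl; lra.
  rewrite aC_S. pose proof (pos_INR n). pose proof (aC_pos n).
  apply Rle_trans with (aC n * 4).
  - apply Rmult_le_reg_r with (INR n + 1). lra.
    replace (aC n * (2 * (2 * INR n + 1)) / (INR n + 1) * (INR n + 1)) with (aC n * (2 * (2 * INR n + 1))) by (field; lra).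
    nra.
  - simpl. nra.
Qed.

Lemma Odd_harm_S n : Odd_harm (S n) = Odd_harm n + / (2 * INR n + 1).
Proof. change (Odd_harm (S n)) with (Odd_harm n + / (2 * INR (S n) - 1)). rewrite S_INR. f_equal. f_equal. ring. Qed.

Lemma Odd_harm_bounds n : 0 <= Odd_harm n <= INR n.
Proof.
  induction n. simpl. lra.
  rewrite Odd_harm_S, S_INR. pose proof (pos_INR n).
  assert (0 < / (2 * INR n + 1) <= 1).
  { split. apply Rinv_0_lt_compat; lra.
    rewrite <- Rinv_1. apply Rinv_le_contravar; lra. }
  lra.
Qed.


Lemma rad_a : Rbar_le (/4) (CV_radius aC).
Proof.
  apply (proj1 (CV_radius_bounded aC)).
  exists 1. intro n. rewrite Rabs_pos_eq.
  - rewrite pow_inv. pose proof (aC_le n). pose proof (pow_lt 4 n).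
    apply Rmult_le_reg_r with (4^n). lra.
    field_simplify; lra.
  - apply Rmult_le_pos. pose proof (aC_pos n); lra. apply pow_le; lra.
Qed.

Lemma rad_b : Rbar_le (/4) (CV_radius bC).
Proof.
  eapply Rbar_le_trans. apply rad_a.
  rewrite <- CV_radius_derive, <- CV_radius_incr_1.
  apply (is_lub_Rbar_subset (fun r => exists M, forall n, Rabs (bC n * r ^ n) <= M)
    (fun r => exists M, forall n, Rabs (PS_incr_1 (PS_derive aC) n * r ^ n) <= M)).
  - intros x [M HM]. exists M. intro n. eapply Rle_trans; [|apply (HM n)].
    rewrite !Rabs_mult. apply Rmult_le_compat_r. apply Rabs_pos.
    destruct n.
    + unfold bC. simpl. rewrite Rmult_0_r, Rabs_R0. apply Rabs_pos.
    + simpl PS_incr_1. unfold PS_derive, bC.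
      pose proof (Odd_harm_bounds (S n)). pose proof (aC_pos (S n)).
      rewrite !Rabs_pos_eq; try (apply Rmult_le_pos; try lra; apply pos_INR).
      rewrite Rmult_comm. apply Rmult_le_compat_r; lra.
  - apply CV_radius_bounded.
  - apply CV_radius_bounded.
Qed.


Lemma ode_lemma (c d : nat -> R) x : ex_pseries c x ->
  (forall n, c n - 4 * PS_incr_1 c n = d n) -> (1-4*x) * PSeries c x = PSeries d x.
Proof.
  intros Hc Hd.
  rewrite <- (PSeries_ext (PS_minus c (PS_scal 4 (PS_incr_1 c))) d x).
  2:{ intro n. rewrite <- Hd. reflexivity. }
  rewrite PSeries_minus; auto.
  - rewrite PSeries_scal, PSeries_incr_1. ring.
  - apply ex_pseries_scal. apply Rmult_comm. apply ex_pseries_incr_1; auto.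
Qed.

Lemma rad_lt_a x : Rabs x < /4 -> Rbar_lt (Rabs x) (CV_radius aC).
Proof. intro H. eapply Rbar_lt_le_trans; [|apply rad_a]. exact H. Qed.
Lemma rad_lt_b x : Rabs x < /4 -> Rbar_lt (Rabs x) (CV_radius bC).
Proof. intro H. eapply Rbar_lt_le_trans; [|apply rad_b]. exact H. Qed.

Lemma ode_a x : Rabs x < /4 ->
  (1 - 4*x) * PSeries (PS_derive aC) x = 2 * PSeries aC x.
Proof.
  intro H. rewrite <- (PSeries_scal 2 aC).
  apply ode_lemma. apply ex_pseries_derive. apply rad_lt_a; auto.
  intro n. destruct n.
  - unfold PS_derive, PS_scal, scal; simpl. unfold mult; simpl.
    rewrite aC_S, aC_0. simpl. unfold zero; simpl. field.
  - change (PS_incr_1 (PS_derive aC) (S n)) with (INR (S n) * aC (S n)).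
    change (PS_derive aC (S n)) with (INR (S (S n)) * aC (S (S n))).
    change (PS_scal 2 aC (S n)) with (2 * aC (S n)).
    rewrite (aC_S (S n)). rewrite !S_INR. pose proof (pos_INR n). field. lra.
Qed.

Lemma ode_b x : Rabs x < /4 ->
  (1 - 4*x) * PSeries (PS_derive bC) x = 2 * PSeries bC x + 2 * PSeries aC x.
Proof.
  intro H. rewrite <- (PSeries_scal 2 aC), <- (PSeries_scal 2 bC), <- PSeries_plus.
  apply ode_lemma. apply ex_pseries_derive. apply rad_lt_b; auto.
  intro n. destruct n.
  - unfold PS_derive, PS_scal, PS_plus, scal, plus; simpl. unfold mult; simpl.
    unfold bC. rewrite aC_S, aC_0. simpl. unfold zero; simpl. field.
  - change (PS_incr_1 (PS_derive bC) (S n)) with (INR (S n) * bC (S n)).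
    change (PS_derive bC (S n)) with (INR (S (S n)) * bC (S (S n))).
    change (PS_plus (PS_scal 2 bC) (PS_scal 2 aC) (S n)) with (2 * bC (S n) + 2 * aC (S n)).
    unfold bC. rewrite (aC_S (S n)), (Odd_harm_S (S n)). rewrite !S_INR. pose proof (pos_INR n). field. lra.
  - apply ex_pseries_scal. apply Rmult_comm. apply CV_radius_inside, rad_lt_b; auto.
  - apply ex_pseries_scal. apply Rmult_comm. apply CV_radius_inside, rad_lt_a; auto.
Qed.


Lemma plusR (a b : R) : plus a b = a + b. Proof. reflexivity. Qed.
Lemma multR (a b : R) : mult a b = a * b. Proof. reflexivity. Qed.
Lemma scalR (a b : R) : scal a b = a * b. Proof. reflexivity. Qed.

Lemma is_derive_eq (f : R -> R) x l l' : is_derive f x l -> l = l' -> is_derive f x l'.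
Proof. intros H <-; exact H. Qed.

Lemma const_on (phi : R -> R) x : Rabs x < /4 ->
  (forall t, Rabs t < /4 -> is_derive phi t 0) -> phi x = phi 0.
Proof.
  intros Hx Hd. destruct (Rtotal_order x 0) as [H|[H|H]].
  - apply eq_is_derive; auto. intros t Ht. apply Hd.
    rewrite Rabs_left1 in Hx by lra. apply Rabs_def1; lra.
  - subst; auto.
  - symmetry. apply eq_is_derive; auto. intros t Ht. apply Hd.
    rewrite Rabs_pos_eq in Hx by lra. apply Rabs_def1; lra.
Qed.

Lemma lin_der t : is_derive (fun t => 1 - 4 * t) t (-4).
Proof. auto_derive; auto. ring. Qed.

Lemma sqrt_der t : Rabs t < /4 ->
  is_derive (fun t => sqrt (1 - 4 * t)) t (-4 / (2 * sqrt (1 - 4 * t))).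
Proof.
  intro H. apply (is_derive_sqrt (fun t => 1 - 4 * t)). apply lin_der.
  apply Rabs_def2 in H. lra.
Qed.

Lemma g_closed x : Rabs x < /4 -> PSeries aC x = / sqrt (1 - 4 * x).
Proof.
  intro Hx.
  assert (E : (fun t => sqrt (1 - 4 * t) * PSeries aC t) x =
              (fun t => sqrt (1 - 4 * t) * PSeries aC t) 0).
  { apply (const_on (fun t => sqrt (1 - 4 * t) * PSeries aC t)); auto. intros t Ht.
    eapply is_derive_eq.
    apply (is_derive_mult (fun t => sqrt (1 - 4 * t)) (PSeries aC)).
    apply sqrt_der; auto. apply is_derive_PSeries, rad_lt_a; auto.
    apply Rmult_comm.
    pose proof (ode_a t Ht).
    assert (Hp : 0 < 1 - 4 * t) by (apply Rabs_def2 in Ht; lra).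
    pose proof (sqrt_lt_R0 _ Hp). pose proof (sqrt_sqrt _ (Rlt_le _ _ Hp)).
    change (plus ?a ?b) with (a + b). repeat change (mult ?a ?b) with (a * b). cbv beta. match goal with |- ?a = ?b => change (@eq R a b) end.
    replace (sqrt (1 - 4 * t) * PSeries (PS_derive aC) t) with
      ((1 - 4 * t) * PSeries (PS_derive aC) t / sqrt (1 - 4 * t)).
    rewrite H. field. lra.
    rewrite <- H1 at 1. field. lra. }
  cbv beta in E. rewrite PSeries_0, aC_0, Rmult_0_r, Rminus_0_r, sqrt_1 in E.
  assert (Hp : 0 < 1 - 4 * x) by (apply Rabs_def2 in Hx; lra).
  pose proof (sqrt_lt_R0 _ Hp).
  apply Rmult_eq_reg_l with (sqrt (1 - 4 * x)). rewrite E. field. lra. lra.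
Qed.

Lemma f_closed x : Rabs x < /4 ->
  PSeries bC x = - ln (1 - 4 * x) / (2 * sqrt (1 - 4 * x)).
Proof.
  intro Hx.
  assert (E : (fun t => plus (sqrt (1 - 4 * t) * PSeries bC t) (/2 * ln (1 - 4 * t))) x =
              (fun t => plus (sqrt (1 - 4 * t) * PSeries bC t) (/2 * ln (1 - 4 * t))) 0).
  { apply (const_on (fun t => plus (sqrt (1 - 4 * t) * PSeries bC t) (/2 * ln (1 - 4 * t)))); auto. intros t Ht.
    assert (Hp : 0 < 1 - 4 * t) by (apply Rabs_def2 in Ht; lra).
    assert (D1 := is_derive_mult (fun t => sqrt (1 - 4 * t)) (PSeries bC) t _ _
       (sqrt_der t Ht) (is_derive_PSeries _ _ (rad_lt_b t Ht)) Rmult_comm).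
    assert (D2 := is_derive_comp ln (fun t => 1 - 4 * t) t _ _ (is_derive_ln _ Hp) (lin_der t)).
    assert (D3 := is_derive_scal _ _ (/2) _ D2).
    assert (D4 := is_derive_plus _ _ _ _ _ D1 D3).
    eapply is_derive_eq. exact D4.
    pose proof (ode_b t Ht). rewrite g_closed in H by auto.
    pose proof (sqrt_lt_R0 _ Hp). pose proof (sqrt_sqrt _ (Rlt_le _ _ Hp)).
    repeat change (plus ?a ?b) with (a + b). repeat change (mult ?a ?b) with (a * b). change (scal ?a ?b) with (a * b). cbv beta. match goal with |- ?a = ?b => change (@eq R a b) end.
    replace (sqrt (1 - 4 * t) * PSeries (PS_derive bC) t) with
      ((1 - 4 * t) * PSeries (PS_derive bC) t / sqrt (1 - 4 * t)).
    rewrite H. replace (/ (1 - 4 * t)) with (/ (sqrt (1 - 4 * t) * sqrt (1 - 4 * t))) by (rewrite H1; reflexivity). field. lra.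
    rewrite <- H1 at 1. field. lra. }
  cbv beta in E. repeat change (plus ?a ?b) with (a + b) in E.
  rewrite PSeries_0 in E. unfold bC in E. simpl Odd_harm in E.
  rewrite Rmult_0_r, Rminus_0_r, sqrt_1, ln_1 in E.
  assert (Hp : 0 < 1 - 4 * x) by (apply Rabs_def2 in Hx; lra).
  pose proof (sqrt_lt_R0 _ Hp).
  apply Rmult_eq_reg_l with (sqrt (1 - 4 * x)). 
  assert (E' : sqrt (1 - 4 * x) * PSeries bC x = - (/ 2 * ln (1 - 4 * x))).
  { assert (E0 : sqrt (1 - 4 * x) * PSeries bC x + / 2 * ln (1 - 4 * x) = 0). { etransitivity. exact E. ring. } lra. }
  rewrite E'. field. lra. lra.
Qed.

Ltac toR := match goal with |- ?a = ?b => change (@eq R a b) end.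

Lemma series_y (y : R) : Rabs (y / 8) < /4 ->
  is_series (fun k => coef (S k) * y ^ (S k)) (ln (1 + y / 2) / (2 * sqrt (1 + y / 2))).
Proof.
  intro Hy.
  assert (Hx : Rabs (- y / 8) < /4).
  { replace (- y / 8) with (- (y / 8)) by field. rewrite Rabs_Ropp. auto. }
  pose proof (PSeries_correct _ _ (CV_radius_inside _ _ (rad_lt_b _ Hx))) as H.
  apply is_pseries_R in H.
  rewrite f_closed in H by auto.
  assert (H1 : is_series (fun k => bC (S k) * (- y / 8) ^ (S k))
     (- ln (1 - 4 * (- y / 8)) / (2 * sqrt (1 - 4 * (- y / 8))))).
  { apply (is_series_incr_1 (fun n => bC n * (- y / 8) ^ n)).
    match goal with |- is_series _ ?l => replace l
      with (- ln (1 - 4 * (- y / 8)) / (2 * sqrt (1 - 4 * (- y / 8)))) end.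
    exact H.
    unfold bC. simpl Odd_harm. change plus with Rplus. toR. ring. }
  apply (is_series_scal (-1)) in H1.
  replace (1 + y / 2) with (1 - 4 * (- y / 8)) by field.
  replace (ln (1 - 4 * (- y / 8)) / (2 * sqrt (1 - 4 * (- y / 8)))) with
    (scal (-1) (- ln (1 - 4 * (- y / 8)) / (2 * sqrt (1 - 4 * (- y / 8))))).
  2:{ change scal with Rmult. toR. unfold Rdiv. ring. }
  eapply is_series_ext; [|exact H1].
  intro k. change scal with Rmult. toR. simpl.
  unfold coef, bC, aC.
  replace (S k - 1)%nat with k by lia.
  replace (- y / 8) with ((-1) * (y * / 8)) by field.
  rewrite !Rpow_mult_distr, pow_inv.
  assert (8 ^ k <> 0) by (apply pow_nonzero; lra).
  change ((-1) ^ S k) with (-1 * (-1) ^ k). change (8 ^ S k) with (8 * 8 ^ k). field. auto.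
Qed.

Definition be : R := 1 - alpha.

Lemma s5_facts : sqrt 5 * sqrt 5 = 5 /\ 2 < sqrt 5 < 3.
Proof.
  assert (H := sqrt_sqrt 5 ltac:(lra)).
  assert (H0 := sqrt_lt_R0 5 ltac:(lra)).
  split; auto. split; nra.
Qed.

Lemma al_sq : alpha * alpha = alpha + 1.
Proof. destruct s5_facts as [H _]. unfold alpha. nra. Qed.
Lemma be_sq : be * be = be + 1.
Proof. pose proof al_sq. unfold be. nra. Qed.
Lemma al_pos : 0 < alpha.
Proof. destruct s5_facts as [_ H]. unfold alpha. lra. Qed.
Lemma be_neg : be < 0.
Proof. destruct s5_facts as [_ H]. unfold be, alpha. lra. Qed.

Lemma binet_fwd a b P Q : a = P + Q -> b = P * alpha + Q * be ->
  forall n, gib_fwd a b n = (P * alpha ^ n + Q * be ^ n, P * alpha ^ (S n) + Q * be ^ (S n)).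
Proof.
  intros Ha Hb n. induction n.
  - simpl. f_equal; [rewrite Ha| rewrite Hb]; ring.
  - cbn [gib_fwd]. rewrite IHn. cbn [fst snd]. f_equal.
    change (alpha ^ S (S n)) with (alpha * (alpha * alpha ^ n)).
    change (be ^ S (S n)) with (be * (be * be ^ n)).
    change (alpha ^ S n) with (alpha * alpha ^ n).
    change (be ^ S n) with (be * be ^ n).
    replace (alpha * (alpha * alpha ^ n)) with ((alpha * alpha) * alpha ^ n) by ring.
    replace (be * (be * be ^ n)) with ((be * be) * be ^ n) by ring.
    rewrite al_sq, be_sq. ring.
Qed.

Lemma binet_bwd a b P Q : a = P + Q -> b = P * alpha + Q * be ->
  forall n, gib_bwd a b n = (P / alpha ^ n + Q / be ^ n, P * alpha / alpha ^ n + Q * be / be ^ n).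
Proof.
  intros Ha Hb n.
  pose proof al_pos. pose proof be_neg.
  assert (Ha1 : alpha - 1 = / alpha).
  { pose proof al_sq. apply Rmult_eq_reg_l with alpha. rewrite Rinv_r. nra. lra. lra. }
  assert (Hb1 : be - 1 = / be).
  { pose proof be_sq. apply Rmult_eq_reg_l with be. rewrite Rinv_r. nra. lra. lra. }
  induction n.
  - simpl. f_equal; [rewrite Ha| rewrite Hb]; field; lra.
  - cbn [gib_bwd]. rewrite IHn. cbn [fst snd].
    assert (alpha ^ n <> 0) by (apply pow_nonzero; lra).
    assert (be ^ n <> 0) by (apply pow_nonzero; lra).
    change (alpha ^ S n) with (alpha * alpha ^ n).
    change (be ^ S n) with (be * be ^ n).
    f_equal.
    + replace (P * alpha / alpha ^ n + Q * be / be ^ n - (P / alpha ^ n + Q / be ^ n))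
        with (P * (alpha - 1) / alpha ^ n + Q * (be - 1) / be ^ n) by (field; auto).
      rewrite Ha1, Hb1. field. split; auto; lra.
    + field. split; auto; lra.
Qed.

Lemma binet a b P Q : a = P + Q -> b = P * alpha + Q * be ->
  forall j, gib a b j = P * powerRZ alpha j + Q * powerRZ be j.
Proof.
  intros Ha Hb j. destruct j as [|p|p].
  - unfold gib. simpl. rewrite Ha. ring.
  - unfold gib. replace (0 <=? Z.pos p)%Z with true by reflexivity.
    replace (Z.to_nat (Z.pos p)) with (Pos.to_nat p) by reflexivity.
    rewrite (binet_fwd a b P Q Ha Hb). reflexivity.
  - unfold gib. replace (0 <=? Z.neg p)%Z with false by reflexivity.
    replace (Z.to_nat (- Z.neg p)) with (Pos.to_nat p) by reflexivity.
    rewrite (binet_bwd a b P Q Ha Hb). reflexivity.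
Qed.

Definition Sa : R := ln (1 + alpha / 2) / (2 * sqrt (1 + alpha / 2)).
Definition Sb : R := ln (1 + be / 2) / (2 * sqrt (1 + be / 2)).

Lemma core P Q t :
  is_series (fun k => coef (S k) * (P * powerRZ alpha (Z.of_nat (S k) + t) + Q * powerRZ be (Z.of_nat (S k) + t)))
    (P * powerRZ alpha t * Sa + Q * powerRZ be t * Sb).
Proof.
  pose proof al_pos. pose proof be_neg. pose proof s5_facts as H5.
  assert (H1 := series_y alpha ltac:(rewrite Rabs_pos_eq; unfold alpha in *; lra)).
  assert (H2 := series_y be ltac:(rewrite Rabs_left; unfold be, alpha in *; lra)).
  apply (is_series_scal (P * powerRZ alpha t)) in H1.
  apply (is_series_scal (Q * powerRZ be t)) in H2.
  assert (H3 := is_series_plus _ _ _ _ H1 H2).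
  eapply is_series_ext; [|exact H3].
  intro k. change scal with Rmult. change plus with Rplus. cbv beta. toR.
  rewrite !powerRZ_add by lra. rewrite <- !pow_powerRZ. ring.
Qed.


Lemma pz_p1 x t : x <> 0 -> powerRZ x (t + 1) = powerRZ x t * x.
Proof. intro. rewrite powerRZ_add by auto. simpl. ring. Qed.
Lemma pz_m1 x t : x <> 0 -> powerRZ x (t - 1) = powerRZ x t / x.
Proof. intro. replace (t - 1)%Z with (t + -1)%Z by ring. rewrite powerRZ_add by auto. simpl. field; auto. Qed.
Lemma pz_m2 x t : x <> 0 -> powerRZ x (t - 2) = powerRZ x t / (x * x).
Proof. intro. replace (t - 2)%Z with (t + -2)%Z by ring. rewrite powerRZ_add by auto. simpl. field; auto. Qed.
Lemma pz_m3 x t : x <> 0 -> powerRZ x (t - 3) = powerRZ x t / (x * x * x).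
Proof. intro. replace (t - 3)%Z with (t + -3)%Z by ring. rewrite powerRZ_add by auto. simpl. field; auto. Qed.

Lemma s5_pow n : sqrt 5 ^ S (S n) = 5 * sqrt 5 ^ n.
Proof. destruct s5_facts as [H _]. change (sqrt 5 ^ S (S n)) with (sqrt 5 * (sqrt 5 * sqrt 5 ^ n)). rewrite <- Rmult_assoc, H. reflexivity. Qed.

Lemma Sa_val : Sa = (ln (sqrt 5 / 2) + ln alpha) * sqrt 2 / (2 * sqrt (alpha + 2)).
Proof.
  destruct s5_facts as [H5 H5b]. pose proof al_pos.
  unfold Sa.
  replace (1 + alpha / 2) with ((sqrt 5 / 2) * alpha) by (unfold alpha; nra).
  rewrite ln_mult by lra.
  replace (sqrt 5 / 2 * alpha) with ((alpha + 2) / 2) by (unfold alpha; nra).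
  rewrite sqrt_div by lra.
  assert (0 < sqrt 2) by (apply sqrt_lt_R0; lra).
  assert (0 < sqrt (alpha + 2)) by (apply sqrt_lt_R0; lra).
  assert (sqrt 2 * sqrt 2 = 2) by (apply sqrt_sqrt; lra).
  field. lra.
Qed.

Lemma Sb_val : Sb = (ln (sqrt 5 / 2) - ln alpha) * sqrt 2 * (5 + sqrt 5) / (4 * sqrt 5 * sqrt (alpha + 2)).
Proof.
  destruct s5_facts as [H5 H5b]. pose proof al_pos.
  assert (0 < sqrt 2) by (apply sqrt_lt_R0; lra).
  assert (0 < sqrt (alpha + 2)) by (apply sqrt_lt_R0; lra).
  assert (H2 : sqrt 2 * sqrt 2 = 2) by (apply sqrt_sqrt; lra).
  assert (HS : sqrt (alpha + 2) * sqrt (alpha + 2) = alpha + 2) by (apply sqrt_sqrt; lra).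
  unfold Sb.
  assert (E : 1 + be / 2 = (sqrt 5 / 2) / alpha).
  { apply Rmult_eq_reg_r with alpha; [|lra]. unfold Rdiv at 2.
    rewrite Rmult_assoc, Rinv_l, Rmult_1_r by lra. unfold be, alpha. nra. }
  rewrite E.
  rewrite ln_div by lra.
  rewrite (sqrt_lem_1 (sqrt 5 / 2 / alpha) (sqrt 5 * sqrt 2 / (2 * sqrt (alpha + 2)))).
  - apply Rmult_eq_reg_r with (sqrt 5 * sqrt 2 * sqrt (alpha + 2) * sqrt (alpha + 2) * 4).
    2:{ apply Rmult_integral_contrapositive_currified; try lra.
        repeat apply Rmult_integral_contrapositive_currified; lra. }
    field_simplify; try lra. replace (sqrt (alpha + 2) ^ 3) with ((alpha + 2) * sqrt (alpha + 2)) by (simpl; rewrite Rmult_1_r, HS; ring).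
    replace (sqrt 2 ^ 2) with 2 by (simpl; lra). set (SS := sqrt (alpha + 2)). set (La := ln alpha). set (Lp := ln (sqrt 5 / 2)). replace (alpha + 2) with ((5 + sqrt 5) / 2) by (unfold alpha; field). match goal with |- ?a = ?b => change (@eq R a b) end. field.
  - apply Rlt_le, Rdiv_lt_0_compat; lra.
  - apply Rlt_le, Rdiv_lt_0_compat. nra. lra.
  - field_simplify; try lra.
    replace (sqrt (alpha + 2) ^ 2) with (alpha + 2) by (simpl; lra).
    replace (sqrt 2 ^ 2) with 2 by (simpl; lra).
    replace (sqrt 5 ^ 2) with 5 by (simpl; lra).
    apply Rmult_eq_reg_r with (4 * (alpha + 2) * (2 * alpha)); [|nra]. field_simplify; try lra. unfold alpha. nra.
Qed.


Lemma al_ne : alpha <> 0. Proof. pose proof al_pos; lra. Qed.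
Lemma be_ne : be <> 0. Proof. pose proof be_neg; lra. Qed.

Lemma binet_L j : Luc j = powerRZ alpha j + powerRZ be j.
Proof. unfold Luc. rewrite (binet 2 1 1 1). ring. ring. unfold be; ring. Qed.

Lemma sqrt10 : sqrt 10 = sqrt 2 * sqrt 5.
Proof. rewrite <- sqrt_mult by lra. f_equal; ring. Qed.

Lemma partL t : is_series (fun k : nat => coef (S k) * Luc (Z.of_nat (S k) + t))
       (sqrt 2 / (2 * sqrt (alpha + 2)) *
        ((powerRZ alpha (t + 1) - Luc (t - 1)) * ln (sqrt 5 / 2)
         + (powerRZ alpha (t - 2) + Luc (t - 1)) * ln alpha)).
Proof.
  assert (Hc := core 1 1 t).
  eapply is_series_ext in Hc.
  2:{ intro k. rewrite (Rmult_1_l (powerRZ alpha _)), (Rmult_1_l (powerRZ be _)). rewrite <- (binet_L (Z.of_nat (S k) + t)). reflexivity. }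
  match goal with |- is_series _ ?l => replace l with (1 * powerRZ alpha t * Sa + 1 * powerRZ be t * Sb) end.
  exact Hc.
  rewrite Sa_val, Sb_val, !binet_L.
  rewrite pz_p1, pz_m1, pz_m2, pz_m1 by (apply al_ne || apply be_ne).
  destruct s5_facts as [H5 H5b].
  assert (0 < sqrt 2) by (apply sqrt_lt_R0; lra).
  assert (0 < sqrt (alpha + 2)) by (apply sqrt_lt_R0; pose proof al_pos; lra).
  set (A := powerRZ alpha t). set (B := powerRZ be t).
  set (Lp := ln (sqrt 5 / 2)). set (La := ln alpha). set (SS := sqrt (alpha + 2)).
  set (s2 := sqrt 2).
  unfold be, alpha.
  apply Rminus_diag_uniq.
  field_simplify; [| repeat split; intro; subst SS; lra].
  unfold Rdiv. apply Rmult_eq_0_compat_r.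
  repeat rewrite s5_pow. ring.
Qed.

Lemma s5_ne : sqrt 5 <> 0. Proof. destruct s5_facts as [_ H]. lra. Qed.

Lemma binet_F j : Fib j = / sqrt 5 * powerRZ alpha j + (- / sqrt 5) * powerRZ be j.
Proof. pose proof s5_ne. unfold Fib. apply binet. field; auto. unfold be, alpha. field; auto. Qed.

Lemma binet_G a b j : gib a b j = (b - a * be) / sqrt 5 * powerRZ alpha j + (a * alpha - b) / sqrt 5 * powerRZ be j.
Proof. pose proof s5_ne. apply binet; unfold be, alpha; field; auto. Qed.

Ltac finish_alg :=
  destruct s5_facts as [H5 H5b];
  let A := fresh "A" in let B := fresh "B" in
  set (A := powerRZ alpha _); set (B := powerRZ be _);
  set (Lp := ln (sqrt 5 / 2)); set (La := ln alpha); set (SS := sqrt (alpha + 2));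
  set (s2 := sqrt 2);
  assert (0 < SS) by (apply sqrt_lt_R0; unfold alpha; lra);
  assert (0 < s2) by (apply sqrt_lt_R0; lra);
  unfold be, alpha;
  apply Rminus_diag_uniq;
  field_simplify; [| repeat split; intro; lra];
  unfold Rdiv; apply Rmult_eq_0_compat_r;
  repeat rewrite s5_pow; ring.

Lemma partF t : is_series (fun k : nat => coef (S k) * Fib (Z.of_nat (S k) + t))
       (sqrt 10 / (10 * sqrt (alpha + 2)) *
        ((powerRZ alpha (t - 2) + Luc (t - 1)) * ln (sqrt 5 / 2)
         + (powerRZ alpha (t + 1) - Luc (t - 1)) * ln alpha)).
Proof.
  assert (Hc := core (/ sqrt 5) (- / sqrt 5) t).
  assert (E : forall k, coef (S k) * (/ sqrt 5 * powerRZ alpha (Z.of_nat (S k) + t) + - / sqrt 5 * powerRZ be (Z.of_nat (S k) + t)) = coef (S k) * Fib (Z.of_nat (S k) + t)).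
  { intro k. rewrite binet_F. reflexivity. }
  apply (is_series_ext _ _ _ E) in Hc.
  match goal with |- is_series _ ?l => replace l with (/ sqrt 5 * powerRZ alpha t * Sa + - / sqrt 5 * powerRZ be t * Sb) end.
  exact Hc.
  rewrite Sa_val, Sb_val, !binet_L, sqrt10.
  rewrite pz_p1, pz_m1, pz_m2, pz_m1 by (apply al_ne || apply be_ne).
  finish_alg.
Qed.

Lemma partG a b t : is_series (fun k : nat => coef (S k) * gib a b (Z.of_nat (S k) + t))
       (sqrt 10 / (10 * sqrt (alpha + 2)) *
        ((powerRZ alpha (t - 3) * (b * alpha + a) + gib a b t + gib a b (t - 2))
           * ln (sqrt 5 / 2)
         + (powerRZ alpha t * (b * alpha + a) - gib a b t - gib a b (t - 2))
           * ln alpha)).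
Proof.
  set (P := (b - a * be) / sqrt 5). set (Q := (a * alpha - b) / sqrt 5).
  assert (Hc := core P Q t).
  assert (E : forall k, coef (S k) * (P * powerRZ alpha (Z.of_nat (S k) + t) + Q * powerRZ be (Z.of_nat (S k) + t)) = coef (S k) * gib a b (Z.of_nat (S k) + t)).
  { intro k. rewrite binet_G. reflexivity. }
  apply (is_series_ext _ _ _ E) in Hc.
  match goal with |- is_series _ ?l => replace l with (P * powerRZ alpha t * Sa + Q * powerRZ be t * Sb) end.
  exact Hc.
  rewrite Sa_val, Sb_val, !binet_G, sqrt10.
  rewrite pz_m3, pz_m2, pz_m2 by (apply al_ne || apply be_ne).
  subst P Q.
  finish_alg.
Qed.


Theorem theorem13 :
  (forall t : Z,
     is_series (fun k : nat => coef (S k) * Luc (Z.of_nat (S k) + t))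
       (sqrt 2 / (2 * sqrt (alpha + 2)) *
        ((powerRZ alpha (t + 1) - Luc (t - 1)) * ln (sqrt 5 / 2)
         + (powerRZ alpha (t - 2) + Luc (t - 1)) * ln alpha))) /\
  (forall t : Z,
     is_series (fun k : nat => coef (S k) * Fib (Z.of_nat (S k) + t))
       (sqrt 10 / (10 * sqrt (alpha + 2)) *
        ((powerRZ alpha (t - 2) + Luc (t - 1)) * ln (sqrt 5 / 2)
         + (powerRZ alpha (t + 1) - Luc (t - 1)) * ln alpha))) /\
  (forall (a b : R) (t : Z), ~ (a = 0 /\ b = 0) ->
     is_series (fun k : nat => coef (S k) * gib a b (Z.of_nat (S k) + t))
       (sqrt 10 / (10 * sqrt (alpha + 2)) *
        ((powerRZ alpha (t - 3) * (b * alpha + a) + gib a b t + gib a b (t - 2))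
           * ln (sqrt 5 / 2)
         + (powerRZ alpha t * (b * alpha + a) - gib a b t - gib a b (t - 2))
           * ln alpha))).
Proof.
  split; [exact partL|]. split; [exact partF|].
  intros a b t _. apply partG.
Qed.
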